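(* Let $r\ge5$ and let $W_{r+1}=C_r\vee K_1$ be the wheel. Then $\operatorname{ZIR}(W_{r+1})=r-\gamma(C_r)=r-\lceil r/3\rceil$ and $\operatorname{zir}(W_{r+1})=\operatorname{Z}(W_{r+1})=\overline{\operatorname{Z}}(W_{r+1})=3$.
   Context: $\vee$ is the join; $\gamma$ is the domination number. Zero forcing: a blue vertex $u$ changes a white vertex $w$ to blue if $w$ is the only white neighbor of $u$; $B$ is a zero forcing set if from blue set $B$ eventually all vertices are blue; $\operatorname{Z}(G)$ is the minimum size of a zero forcing set and $\overline{\operatorname{Z}}(G)$ the maximum size of an inclusion-minimal zero forcing set. A nonempty $F\subseteq V(G)$ is a fort if every $v\notin F$ has $|N(v)\cap F|\ne1$. A private fort of $x\in S$ relative to $S$ is a fort $F$ with $S\cap F=\{x\}$; $S$ is a ZIr-set if every element of $S$ has a private fort. $\operatorname{zir}(G)$ / $\operatorname{ZIR}(G)$ are the minimum / maximum cardinality of an inclusion-maximal ZIr-set. *)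

(* Defs.v *)
From mathcomp Require Import all_boot.
Set Implicit Arguments. Unset Strict Implicit. Unset Printing Implicit Defensive.

Section Graph.
Variables (V : finType) (adj : rel V).

Definition nbhd (v : V) : {set V} := [set u | adj v u].

Definition force_step (B : {set V}) : {set V} :=
  B :|: [set w | [exists u in B, (w \notin B) && (nbhd u :\: B == [set w])]].

(* the final coloring: after #|V| rounds nothing changes any more *)
Definition zf_closure (B : {set V}) : {set V} := iter #|V| force_step B.

Definition zero_forcing_set (B : {set V}) : bool := zf_closure B == setT.

(* Z(G): minimum size of a zero forcing set (V itself is one) *)
Definition Zf : nat :=
  \big[minn/#|V|]_(B : {set V} | zero_forcing_set B) #|B|.

Definition Zbar : nat :=
  \max_(B : {set V} | minset zero_forcing_set B) #|B|.

Definition fort (F : {set V}) : bool :=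
  (F != set0) && [forall v, (v \notin F) ==> (#|nbhd v :&: F| != 1)].

Definition private_fort (S : {set V}) (x : V) (F : {set V}) : bool :=
  fort F && (S :&: F == [set x]).

Definition ZIr_set (S : {set V}) : bool :=
  [forall x in S, exists F : {set V}, private_fort S x F].

(* zir / ZIR : min / max cardinality of an inclusion-maximal ZIr-set
   (the empty set is a ZIr-set, so maximal ones exist) *)
Definition zir : nat :=
  \big[minn/#|V|]_(S : {set V} | maxset ZIr_set S) #|S|.

Definition ZIR : nat :=
  \max_(S : {set V} | maxset ZIr_set S) #|S|.

Definition dominating (D : {set V}) : bool :=
  [forall v, (v \in D) || [exists u in D, adj u v]].

Definition domination_number : nat :=
  \big[minn/#|V|]_(D : {set V} | dominating D) #|D|.

End Graph.

Definition cycle_adj (r : nat) : rel 'I_r :=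
  fun i j => (val j == i.+1 %% r) || (val i == j.+1 %% r).

(* wheel W_{r+1} = C_r \vee K_1 on option 'I_r, the hub being None *)
Definition wheel_adj (r : nat) : rel (option 'I_r) :=
  fun x y => match x, y with
             | Some i, Some j => cycle_adj i j
             | Some _, None | None, Some _ => true
             | None, None => false
             end.

(* Main.v *)
Require Import Defs.
From mathcomp Require Import all_boot.
From mathcomp Require Import zify.
From Stdlib Require Import Classical.
Set Implicit Arguments. Unset Strict Implicit. Unset Printing Implicit Defensive.

Lemma bigmin_le (T : finType) (P : pred T) (f : T -> nat) d x :
  P x -> \big[minn/d]_(y | P y) f y <= f x.
Proof.
move=> Px; have : x \in index_enum T by rewrite mem_index_enum.
elim: (index_enum T) => // y s IH; rewrite inE big_cons => /orP[/eqP<-|xs].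
  by rewrite Px geq_minl.
case: (P y); last exact: IH.
by rewrite geq_min IH ?orbT.
Qed.

Lemma bigmin_ge (T : finType) (P : pred T) (f : T -> nat) d m :
  m <= d -> (forall y, P y -> m <= f y) -> m <= \big[minn/d]_(y | P y) f y.
Proof.
move=> md H; elim/big_rec: _ => // i x Pi mx.
by rewrite leq_min mx (H i Pi).
Qed.

Lemma card_neq1 (T : finType) (A : {set T}) x y :
  x \in A -> y \in A -> x != y -> #|A| != 1.
Proof.
move=> xA yA xy; apply/negP => /cards1P[z Az].
by move: xA yA xy; rewrite Az !inE => /eqP-> /eqP->; rewrite eqxx.
Qed.

Section Gen.
Variables (V : finType) (adj : rel V).

Lemma sub_force (B : {set V}) : B \subset force_step adj B.
Proof. by rewrite /force_step subsetUl. Qed.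

Lemma iter_sub k (B : {set V}) : B \subset iter k (force_step adj) B.
Proof.
elim: k => [|k IH] /=; first exact: subxx.
exact: subset_trans IH (sub_force _).
Qed.

Lemma zf_meets (B F : {set V}) : zero_forcing_set adj B -> fort adj F -> B :&: F != set0.
Proof.
move=> zB /andP[Fn0 /forallP Fv]; apply/negP => /eqP BF.
suff H : forall k, iter k (force_step adj) B :&: F = set0.
  move: (H #|V|); move/eqP: zB; rewrite /zf_closure => ->; rewrite setTI => F0.
  by rewrite F0 eqxx in Fn0.
elim=> [|k IH] //=.
set X := iter k _ B in IH *.
have notXF y : y \in X -> y \in F -> False.
  move=> yX yF; have : y \in X :&: F by rewrite inE yX yF.
  by rewrite IH inE.
apply/setP=> w; rewrite inE in_set0; apply/negP => /andP[].
rewrite /force_step inE => /orP[wX wF|]; first exact: (notXF w).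
rewrite inE => /existsP[u /andP[uX /andP[wX /eqP Nu]]] wF.
have uF : u \notin F by apply/negP => /(notXF u uX).
move: (Fv u); rewrite uF /= => /negP; apply; apply/cards1P; exists w.
apply/setP=> y; rewrite !inE.
have Hy : (y \in nbhd adj u :\: X) = (y \in [set w]) by rewrite Nu.
move: Hy; rewrite !inE => Hy.
case: (boolP (y == w)) => [/eqP->|ne].
  have : w \in nbhd adj u :\: X by rewrite Nu set11.
  rewrite !inE => /andP[_ ->]; by rewrite wF.
case yF: (y \in F); last by rewrite andbF.
have yX : y \notin X by apply/negP => /(notXF y)/(_ yF).
by move: Hy; rewrite yX (negbTE ne) /= => ->.
Qed.

Lemma iter_fix (B : {set V}) k : force_step adj (iter k (force_step adj) B) = iter k (force_step adj) B ->
  forall d, iter (d + k) (force_step adj) B = iter k (force_step adj) B.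
Proof.
move=> Hk; elim=> [|d IH] //.
by rewrite addSn /= IH Hk.
Qed.

Lemma zf_fix (B : {set V}) : force_step adj (zf_closure adj B) = zf_closure adj B.
Proof.
rewrite /zf_closure.
case: (boolP [exists k : 'I_#|V|.+1, force_step adj (iter k (force_step adj) B) == iter k (force_step adj) B]).
  move=> /existsP[k /eqP Hk].
  have kV : k <= #|V| by rewrite -ltnS ltn_ord.
  have E := iter_fix Hk (#|V| - k); rewrite subnK // in E.
  by rewrite E Hk.
move=> /existsPn Hn.
have H : forall k, k <= #|V|.+1 -> k <= #|iter k (force_step adj) B|.
  elim=> [|k IH] // kV.
  have kV' : k < #|V|.+1 by [].
  have := Hn (Ordinal kV'); rewrite /= => ne.
  have pr : iter k (force_step adj) B \proper force_step adj (iter k (force_step adj) B).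
    by rewrite properEneq eq_sym ne sub_force.
  apply: leq_ltn_trans (proper_card pr).
  exact: IH (ltnW kV).
have := H _ (leqnn _); rewrite leqNgt ltnS max_card //.
Qed.

Lemma meets_zf (B : {set V}) : (forall F, fort adj F -> B :&: F != set0) -> zero_forcing_set adj B.
Proof.
move=> H; rewrite /zero_forcing_set.
set C := zf_closure adj B.
have fixC : force_step adj C = C := zf_fix B.
have BC : B \subset C := iter_sub _ _.
case: (boolP (C == setT)) => // CT.
have : fort adj (~: C).
  rewrite /fort; apply/andP; split.
    apply/negP => /eqP C0; by move: CT; rewrite -(setCK C) C0 setC0 eqxx.
  apply/forallP => v; apply/implyP; rewrite inE negbK => vC.
  apply/negP => /cards1P [w Hw].
  have wN : w \in nbhd adj v :&: ~: C by rewrite Hw set11.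
  have : w \in force_step adj C.
    rewrite /force_step inE; apply/orP; right; rewrite inE; apply/existsP; exists v.
    rewrite vC /=; move: wN; rewrite !inE => /andP[_ ->] /=.
    by rewrite setDE Hw eqxx.
  by rewrite fixC; move: wN; rewrite !inE => /andP[_ /negbTE ->].
move/H; rewrite -setDE.
by rewrite setD_eq0 BC.
Qed.

End Gen.

Section Wheel.
Variables (r : nat) (hr : 5 <= r).
Local Notation W := (@wheel_adj r).
Local Notation Cy := (@cycle_adj r).
Local Notation V := (option 'I_r).

Lemma r_gt0 : 0 < r. Proof. lia. Qed.

Lemma cadjE (i j : 'I_r) : Cy i j = (j == ordS i) || (i == ordS j).
Proof. by []. Qed.

Lemma ordS_neq (i : 'I_r) : ordS i != i.
Proof.
rewrite -val_eqE /=; have := ltn_ord i.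
case: (ltngtP i.+1 r) => h _.
- by rewrite modn_small //; lia.
- lia.
- by rewrite h modnn; lia.
Qed.

Lemma iterS_val k (i : 'I_r) : val (iter k (@ordS r) i) = (i + k) %% r.
Proof.
elim: k => [|k IH] /=; first by rewrite addn0 modn_small.
by rewrite IH -addn1 modnDml addn1 addnS.
Qed.

Lemma ordSS_neq (i : 'I_r) : ordS (ordS i) != i.
Proof.
rewrite -val_eqE; have := iterS_val 2 i; rewrite /= => ->.
have := ltn_ord i => ir.
case: (ltnP (i + 2) r) => h.
  by rewrite modn_small //; lia.
rewrite -(subnK h) modnDr modn_small; lia.
Qed.

Lemma ordS_pred_neq (i : 'I_r) : ordS i != ord_pred i.
Proof.
apply/negP => /eqP E; have := ordSS_neq i; by rewrite E ord_predK eqxx.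
Qed.

Lemma pred_neq (i : 'I_r) : ord_pred i != i.
Proof.
apply/negP => /eqP E; have := ordS_neq (ord_pred i); by rewrite ord_predK E eqxx.
Qed.

Lemma adj_S (i : 'I_r) : Cy i (ordS i). Proof. by rewrite cadjE eqxx. Qed.
Lemma adj_P (i : 'I_r) : Cy i (ord_pred i). Proof. by rewrite cadjE ord_predK eqxx orbT. Qed.
Lemma adj_S' (i : 'I_r) : Cy (ordS i) i. Proof. by rewrite cadjE eqxx orbT. Qed.
Lemma adj_P' (i : 'I_r) : Cy (ord_pred i) i. Proof. by rewrite cadjE ord_predK eqxx. Qed.

Lemma cadj_cases (i j : 'I_r) : Cy i j -> j = ordS i \/ j = ord_pred i.
Proof.
rewrite cadjE => /orP[/eqP->|/eqP->]; [by left | by right; rewrite ordSK].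
Qed.

Lemma nbhdS (b : 'I_r) y : (y \in nbhd W (Some b)) = (if y is Some c then Cy b c else true).
Proof. by rewrite inE; case: y. Qed.

Lemma nbhdN y : (y \in nbhd W None) = (if y is Some c then true else false).
Proof. by rewrite inE; case: y. Qed.

Lemma no_adj_pair (F : {set V}) a : fort W F -> None \notin F ->
  Some a \notin F -> Some (ordS a) \notin F -> False.
Proof.
move=> fF hN ha hSa; move: (fF) => /andP[Fn0 /forallP Fv].
have step : forall b, Some b \notin F -> Some (ordS b) \notin F -> Some (ordS (ordS b)) \notin F.
  move=> b hb hSb; apply/negP=> hSSb.
  move: (Fv (Some (ordS b))); rewrite hSb /= => /negP; apply; apply/cards1P.
  exists (Some (ordS (ordS b))).
  apply/setP=> y; rewrite !inE; case: y => [c|] /=; last by rewrite (negbTE hN).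
  case: (boolP (c == ordS (ordS b))) => [/eqP->|ne]; first by rewrite adj_S hSSb eqxx.
  rewrite cadjE (negbTE ne) /= (inj_eq (@ordS_inj _)).
  case: (boolP (b == c)) => [/eqP<-|] /=.
    by rewrite (negbTE hb) /=; apply/esym/negbTE; rewrite (inj_eq Some_inj) eq_sym ordSS_neq.
  by move=> _; apply/esym/negbTE; rewrite (inj_eq Some_inj).
have all_k : forall k, Some (iter k (@ordS r) a) \notin F /\ Some (iter k.+1 (@ordS r) a) \notin F.
  elim=> [|k [IH1 IH2]] //=.
  by split => //; exact: step IH1 IH2.
move: Fn0; apply/negP; rewrite negbK; apply/eqP/setP => y; rewrite in_set0.
case: y => [j|]; last exact: negbTE.
have ar := ltn_ord a; have jr := ltn_ord j.
have E : iter (j + r - a) (@ordS r) a = j.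
  apply: val_inj; rewrite iterS_val.
  have -> : a + (j + r - a) = j + r by lia.
  by rewrite modnDr modn_small.
by have [+ _] := all_k (j + r - a); rewrite E => /negbTE.
Qed.

Lemma hub_nbr (F : {set V}) v : fort W F -> None \in F -> Some v \notin F ->
  (Some (ordS v) \in F) || (Some (ord_pred v) \in F).
Proof.
move=> /andP[_ /forallP Fv] hN hv; apply/negPn/negP => H.
move: (Fv (Some v)); rewrite hv /= => /negP; apply; apply/cards1P; exists None.
apply/setP=> y; rewrite !inE; case: y => [c|] /=; last by rewrite hN.
case: (boolP (Cy v c)) => //= /cadj_cases [->|->].
  by apply/negbTE; apply: contra H => Hc; rewrite Hc ?orbT.
by apply/negbTE; apply: contra H => Hc; rewrite Hc ?orbT.
Qed.

Definition cycfort (I : {set 'I_r}) : {set V} :=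
  [set y : V | if y is Some i then i \notin I else false].
Definition hubfort (D : {set 'I_r}) : {set V} :=
  [set y : V | if y is Some i then i \in D else true].

Definition a0 : 'I_r := Ordinal r_gt0.

Lemma cycfort_fort (I : {set 'I_r}) : (forall i, i \in I -> ordS i \notin I) -> fort W (cycfort I).
Proof.
move=> indep.
have [a aI] : exists a, a \notin I.
  case: (boolP (a0 \in I)) => h; [exists (ordS a0); exact: indep | by exists a0].
apply/andP; split.
  by apply/set0Pn; exists (Some a); rewrite inE.
apply/forallP => v; apply/implyP; rewrite inE; case: v => [i|] /= hv.
  rewrite negbK in hv.
  apply: (@card_neq1 _ _ (Some (ordS i)) (Some (ord_pred i))).
  - by rewrite !inE /= adj_S indep.
  - rewrite !inE /= adj_P /=; apply/negP => hp; have := indep _ hp; by rewrite ord_predK hv.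
  - by rewrite (inj_eq Some_inj) ordS_pred_neq.
case: (boolP (ordS a \in I)) => h.
  apply: (@card_neq1 _ _ (Some a) (Some (ordS (ordS a)))).
  - by rewrite !inE.
  - by rewrite !inE indep.
  - by rewrite (inj_eq Some_inj) eq_sym ordSS_neq.
apply: (@card_neq1 _ _ (Some a) (Some (ordS a))).
- by rewrite !inE.
- by rewrite !inE.
- by rewrite (inj_eq Some_inj) eq_sym ordS_neq.
Qed.

Lemma hubfort_fort (D : {set 'I_r}) : dominating Cy D -> fort W (hubfort D).
Proof.
move=> /forallP dom; apply/andP; split.
  by apply/set0Pn; exists None; rewrite inE.
apply/forallP => v; apply/implyP; rewrite inE; case: v => [i|] //= hv.
move: (dom i); rewrite (negbTE hv) /= => /existsP[u /andP[uD uadj]].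
apply: (@card_neq1 _ _ None (Some u)) => //.
- by rewrite !inE.
- rewrite !inE /= uD andbT cadjE; by rewrite cadjE orbC in uadj.
Qed.


Lemma card_opt (S : {set V}) : #|S| = #|[set i | Some i \in S]| + (None \in S).
Proof.
set T := [set i | Some i \in S].
have E : S = (if None \in S then [set None] else set0) :|: Some @: T.
  apply/setP => -[i|]; rewrite !inE.
    rewrite (mem_imset _ _ (@Some_inj _)) inE.
    by case: (None \in S); rewrite ?inE.
  case: (None \in S); rewrite ?inE //=.
  by apply/esym/negbTE/imsetP => -[].
have NT : None \notin Some @: T by apply/imsetP => -[].
rewrite {1}E; case: (None \in S).
  by rewrite cardsU1 NT card_imset //; [rewrite addnC | exact: Some_inj].
by rewrite set0U card_imset ?addn0 //; exact: Some_inj.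
Qed.

Lemma indep_card (I : {set 'I_r}) : (forall i, i \in I -> ordS i \notin I) -> 2 * #|I| <= r.
Proof.
move=> indep.
have dis : I :&: @ordS r @: I = set0.
  apply/setP => j; rewrite !inE; apply/negbTE/negP => /andP[jI /imsetP[i iI ji]].
  by have := indep _ iI; rewrite -ji jI.
have := cardsUI I (@ordS r @: I); rewrite dis cards0 addn0 card_imset; last exact: ordS_inj.
move=> E; rewrite mul2n -addnn -E.
by have := max_card (I :|: @ordS r @: I); rewrite card_ord.
Qed.

Lemma dom_card (D : {set 'I_r}) : dominating Cy D -> r <= 3 * #|D|.
Proof.
move=> /forallP dom.
have sub : [set: 'I_r] \subset D :|: @ordS r @: D :|: @ord_pred r @: D.
  apply/subsetP => v _; move: (dom v) => /orP[vD|/existsP[u /andP[uD /cadj_cases [->|->]]]].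
  - by rewrite !inE vD.
  - by rewrite !inE imset_f ?orbT.
  - by rewrite !inE imset_f ?orbT.
have := subset_leq_card sub; rewrite cardsT card_ord => h.
apply: (leq_trans h).
have h0 : #|D :|: @ordS r @: D :|: @ord_pred r @: D| <= #|D :|: @ordS r @: D| + #|@ord_pred r @: D| := leq_card_setU _ _.
have h1 : #|D :|: @ordS r @: D| <= #|D| + #|@ordS r @: D| := leq_card_setU _ _.
have h2 := leq_imset_card (@ordS r) D.
have h3 := leq_imset_card (@ord_pred r) D.
apply: (leq_trans (leq_trans h0 (leq_add (leq_trans h1 (leq_add (leqnn _) h2)) h3))); rewrite (mulSn 2) (mulSn 1) mul1n addnA; exact: leqnn.
Qed.

Definition toI (k : nat) : 'I_r := Ordinal (ltn_pmod k r_gt0).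

Definition D0 : {set 'I_r} := [set i : 'I_r | i %% 3 == 0].

Lemma D0_dom : dominating Cy D0.
Proof.
apply/forallP => v; rewrite inE.
case: (boolP (v %% 3 == 0)) => //= h0.
have vr := ltn_ord v.
case: (boolP (v %% 3 == 1)) => h1.
  have vp : v.-1 < r by lia.
  apply/existsP; exists (Ordinal vp); rewrite inE /= /cycle_adj /=.
  apply/andP; split; first lia.
  have -> : v.-1.+1 = v :> nat by lia.
  by rewrite modn_small ?eqxx.
case: (ltnP v.+1 r) => h.
  apply/existsP; exists (Ordinal h); rewrite inE /= /cycle_adj /=.
  apply/andP; split; first lia.
  by rewrite (modn_small h) eqxx orbT.
apply/existsP; exists a0; rewrite inE /= /cycle_adj /=.
have -> : v.+1 = r by lia.
by rewrite modnn eqxx orbT.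
Qed.

Lemma D0_card : #|D0| <= (r + 2) %/ 3.
Proof.
have sub : D0 \subset [set toI (3 * val k) | k : 'I_((r + 2) %/ 3)].
  apply/subsetP => i; rewrite inE => h.
  have ir := ltn_ord i.
  have k3 : i %/ 3 < (r + 2) %/ 3 by lia.
  apply/imsetP; exists (Ordinal k3) => //.
  apply: val_inj; rewrite /= modn_small; lia.
apply: (leq_trans (subset_leq_card sub)).
by apply: (leq_trans (leq_imset_card _ _)); rewrite card_ord.
Qed.

Lemma dom_eq : domination_number Cy = (r + 2) %/ 3.
Proof.
apply/eqP; rewrite eqn_leq; apply/andP; split.
  apply: leq_trans (bigmin_le _ _ D0_dom) D0_card.
apply: bigmin_ge; first by rewrite card_ord; lia.
move=> D /dom_card; move: #|D| => d; lia.
Qed.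

Lemma cards3 (T : finType) (x y z : T) : x != y -> x != z -> y != z -> #|[set x; y; z]| = 3.
Proof.
have -> : [set x; y; z] = x |: [set y; z] by apply/setP => w; rewrite !inE orbA.
by move=> xy xz yz; rewrite cardsU1 cards2 !inE (negbTE xy) (negbTE xz) yz. Qed.

Lemma cards3le (T : finType) (x y z : T) : #|[set x; y; z]| <= 3.
Proof.
have -> : [set x; y; z] = x |: [set y; z] by apply/setP => w; rewrite !inE orbA.
by rewrite cardsU1 cards2; case: (_ \notin _); case: (_ != _). Qed.

Lemma ZIr_priv (S : {set V}) x : ZIr_set W S -> x \in S ->
  exists F, [/\ fort W F, x \in F & forall y, y \in S -> y \in F -> y = x].
Proof.
move=> /forallP H xS; move: (H x); rewrite xS /= => /existsP[F /andP[fF /eqP SF]].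
exists F; split => //.
  have : x \in S :&: F by rewrite SF set11.
  by rewrite inE => /andP[].
move=> y yS yF; have : y \in S :&: F by rewrite inE yS yF.
by rewrite SF inE => /eqP.
Qed.

Lemma ZIr_of (S : {set V}) :
  (forall x, x \in S -> exists F, fort W F /\ forall y, y \in S -> (y \in F) = (y == x)) ->
  ZIr_set W S.
Proof.
move=> H; apply/forallP => x; apply/implyP => xS.
have [F [fF HF]] := H x xS.
apply/existsP; exists F; rewrite /private_fort fF /=.
apply/eqP/setP => y; rewrite !inE.
case yS: (y \in S) => /=; first exact: HF.
apply/esym/negbTE/negP => /eqP yx; by rewrite yx xS in yS.
Qed.

Lemma three_distinct v (A : {set 'I_r}) : #|A| <= 2 -> v \in A -> ordS v \in A -> ord_pred v \in A -> False.
Proof.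
move=> cA vA sA pA.
have sub : [set v; ordS v; ord_pred v] \subset A.
  by apply/subsetP => y; rewrite !inE -?orbA => /or3P[]/eqP->.
have := subset_leq_card sub.
rewrite cards3 ?ordS_pred_neq // 1?eq_sym ?ordS_neq ?pred_neq // => h.
by have := leq_trans h cA.
Qed.

Lemma Tab_ZIr a b : a != b -> ZIr_set W [set None; Some a; Some b].
Proof.
move=> ab; apply: ZIr_of => x; rewrite !inE -?orbA => /or3P[]/eqP->.
- exists (hubfort (~: [set a; b])); split.
    apply: hubfort_fort; apply/forallP => v; rewrite !inE.
    case: (boolP ((v == a) || (v == b))) => //= hv.
    apply/existsP.
    case: (boolP ((ordS v == a) || (ordS v == b))) => hS.
      case: (boolP ((ord_pred v == a) || (ord_pred v == b))) => hP.
        exfalso; apply: (@three_distinct v [set a; b]).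
        + by rewrite cards2; case: (_ != _).
        + by rewrite !inE.
        + by rewrite !inE.
        + by rewrite !inE.
      by exists (ord_pred v); rewrite !inE hP /= adj_P'.
    by exists (ordS v); rewrite !inE hS /= adj_S'.
  by move=> y; rewrite !inE -?orbA => /or3P[]/eqP-> /=; rewrite ?inE ?eqxx ?orbT.
- exists (cycfort [set b]); split.
    by apply: cycfort_fort => i; rewrite !inE => /eqP->; rewrite ordS_neq.
  move=> y; rewrite !inE -?orbA => /or3P[]/eqP-> /=; rewrite ?inE ?eqxx ?(inj_eq Some_inj) //.
  by rewrite eq_sym (negbTE ab).
- exists (cycfort [set a]); split.
    by apply: cycfort_fort => i; rewrite !inE => /eqP->; rewrite ordS_neq.
  move=> y; rewrite !inE -?orbA => /or3P[]/eqP-> /=; rewrite ?inE ?eqxx ?(inj_eq Some_inj) //.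
    by rewrite (negbTE ab).
by rewrite eq_sym ab.
Qed.

Lemma T1_max : maxset (ZIr_set W) [set None; Some a0; Some (ordS a0)].
Proof.
apply/maxsetP; split; first by apply: Tab_ZIr; rewrite eq_sym ordS_neq.
move=> B zB sub; apply/eqP; rewrite eqEsubset sub andbT.
apply/subsetP => y yB; apply/negPn/negP => ny.
have [F [fF yF HF]] := ZIr_priv zB yB.
have nF z : z \in [set None; Some a0; Some (ordS a0)] -> z \notin F.
  move=> zT; apply/negP => zF; have E := HF z (subsetP sub z zT) zF.
  by move: ny; rewrite -E zT.
apply: (@no_adj_pair F a0 fF); apply: nF; by rewrite !inE eqxx ?orbT.
Qed.

Lemma max_ge3 (S : {set V}) : maxset (ZIr_set W) S -> 3 <= #|S|.
Proof.
move=> mS; rewrite leqNgt; apply/negP => small.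
have cS := card_opt S; set T := [set i | Some i \in S] in cS.
have T2 : #|T| <= 2.
  move: small; rewrite cS; move: (#|T|) => t; case: (None \in S) => /=; lia.
have [a [b [ab sub]]] : exists a b, a != b /\ T \subset [set a; b].
  have : #|T| = 2 \/ #|T| = 1 \/ #|T| = 0 by move: (#|T|) T2 => t; lia.
  case=> [/eqP/cards2P[a [b [ab ->]]]|[/eqP/cards1P[a ->]|/cards0_eq ->]].
  - by exists a, b; rewrite subxx.
  - exists a, (ordS a); rewrite eq_sym ordS_neq; split => //.
    by apply/subsetP => y; rewrite !inE => ->.
  - by exists a0, (ordS a0); rewrite eq_sym ordS_neq sub0set.
have SsubT : S \subset [set None; Some a; Some b].
  apply/subsetP => -[i|] yS; rewrite !inE //=.
  have : i \in T by rewrite inE.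
  by move/(subsetP sub); rewrite !inE !(inj_eq Some_inj).
have E := maxsetsup mS (Tab_ZIr ab) SsubT.
by move: small; rewrite -E cards3 // ?(inj_eq Some_inj).
Qed.

Lemma dom_compl (T : {set 'I_r}) : ~ (exists v, [/\ v \in T, ordS v \in T & ord_pred v \in T]) ->
  dominating Cy (~: T).
Proof.
move=> no3; apply/forallP => v; rewrite inE.
case: (boolP (v \in T)) => //= vT.
apply/existsP.
case: (boolP (ordS v \in T)) => hS.
  case: (boolP (ord_pred v \in T)) => hP.
    by exfalso; apply: no3; exists v.
  by exists (ord_pred v); rewrite inE hP /= adj_P'.
by exists (ordS v); rewrite inE hS /= adj_S'.
Qed.

Lemma ZIr_ub (S : {set V}) : ZIr_set W S -> #|S| <= r - (r + 2) %/ 3.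
Proof.
move=> zS.
have cS := card_opt S; set T := [set i | Some i \in S] in cS.
have inT i : (i \in T) = (Some i \in S) by rewrite inE.
have pairF : forall x F, fort W F -> None \notin F ->
   (forall y, y \in S -> y \in F -> y = x) ->
   forall i, i \in T -> ordS i \in T -> Some i != x -> Some (ordS i) != x -> False.
  move=> x F fF hN HF i iT iST ix iSx.
  apply: (@no_adj_pair F i fF hN); apply/negP => h.
    by move/eqP: ix; apply; apply: HF => //; move: iT; rewrite inE.
  by move/eqP: iSx; apply; apply: HF => //; move: iST; rewrite inE.
have bound1 : forall t, 2 * t <= r -> t + 1 <= r - (r + 2) %/ 3 by move=> t; lia.
have bound3 : 3 <= r - (r + 2) %/ 3 by lia.
case: (boolP (None \in S)) => hN.
  rewrite cS hN /=.
  case: (leqP #|T| 2) => hT.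
    by apply: leq_trans bound3; move: (#|T|) hT => t; lia.
  have indep : forall i, i \in T -> ordS i \notin T.
    move=> i iT; apply/negP => iST.
    have : ~~ (T \subset [set i; ordS i]).
      apply/negP => /subset_leq_card; rewrite cards2 => h.
      by have := leq_trans h (leq_b1 _ : (_ != _).+1 <= 2); rewrite leqNgt hT.
    case/subsetPn => x xT; rewrite !inE negb_or => /andP[xi xSi].
    have xS : Some x \in S by move: xT; rewrite inE.
    have [F [fF xF HF]] := ZIr_priv zS xS.
    have hNF : None \notin F by apply/negP => hF; have := HF None hN hF.
    by apply: (pairF _ F fF hNF HF i iT iST); rewrite (inj_eq Some_inj) eq_sym.
  by have := indep_card indep; move: (#|T|) => t; lia.
rewrite cS (negbTE hN) addn0.
case: (classic (exists c F, [/\ Some c \in S, fort W F, None \notin F & forall y, y \in S -> y \in F -> y = Some c])).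
  move=> [c [F [cS' fF hNF HF]]].
  have indep : forall i, i \in T :\ c -> ordS i \notin T :\ c.
    move=> i; rewrite !inE => /andP[ic iT]; apply/negP => /andP[Sic SiT].
    apply: (pairF _ F fF hNF HF i) => //; rewrite ?inT // (inj_eq Some_inj) //.
  have := indep_card indep; have := cardsD1 c T; rewrite inT cS' /=.
  by move: (#|T|) (#|T :\ c|) => t t'; lia.
move=> noH.
have allN : forall c F, Some c \in S -> fort W F -> (forall y, y \in S -> y \in F -> y = Some c) -> None \in F.
  move=> c F cS' fF HF; apply/negPn/negP => hNF; apply: noH; by exists c, F.
case: (classic (exists v, [/\ v \in T, ordS v \in T & ord_pred v \in T])).
  move=> [v [vT vST vPT]].
  have sub : T \subset [set v; ordS v; ord_pred v].
    apply/subsetP => c cT; rewrite !inE.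
    case: (boolP (c == v)) => //= cv.
    have cS' : Some c \in S by rewrite -inT.
    have [F [fF cF HF]] := ZIr_priv zS cS'.
    have hNF := allN c F cS' fF HF.
    have vF : Some v \notin F.
      apply/negP => vF; have := HF _ _ vF; rewrite -inT => /(_ vT) [] E.
      by rewrite E eqxx in cv.
    case/orP: (hub_nbr fF hNF vF) => h.
      by have := HF _ _ h; rewrite -inT => /(_ vST) [] <-; rewrite eqxx.
    by have := HF _ _ h; rewrite -inT => /(_ vPT) [] <-; rewrite eqxx orbT.
  have := subset_leq_card sub; have := cards3le v (ordS v) (ord_pred v).
  by move: (#|T|) (#|[set v; ordS v; ord_pred v]|) => t t'; lia.
move=> no3.
have hd : (r + 2) %/ 3 <= #|~: T|.
  rewrite -dom_eq; exact: (bigmin_le _ _ (dom_compl no3)).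
have := cardsC T; rewrite card_ord.
by move: (#|T|) (#|~: T|) hd => t t'; lia.
Qed.

Lemma S0_ZIr : ZIr_set W (cycfort D0).
Proof.
apply: ZIr_of => -[i|]; rewrite inE //= => iD.
exists (hubfort (i |: D0)); split.
  apply: hubfort_fort; apply/forallP => v; move/forallP: D0_dom => /(_ v).
  rewrite !inE => /orP[->|/existsP[u /andP[uD uv]]]; rewrite ?orbT //.
  apply/orP; right; apply/existsP; exists u; rewrite in_setU1 uv andbT; apply/orP; right; exact: uD.
move=> -[j|]; rewrite !inE //= => jD.
by rewrite (negbTE jD) orbF (inj_eq Some_inj).
Qed.

Lemma S0_card : r - (r + 2) %/ 3 <= #|cycfort D0|.
Proof.
rewrite card_opt inE /= addn0.
have -> : [set i | Some i \in cycfort D0] = ~: D0 by apply/setP => i; rewrite !inE.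
have := cardsC D0; rewrite card_ord; have := D0_card.
by move: (#|D0|) (#|~: D0|) => t t'; lia.
Qed.

Definition trip (a : 'I_r) : {set V} := [set None; Some a; Some (ordS a)].
Definition cons3 (v : 'I_r) : {set V} := [set Some (ord_pred v); Some v; Some (ordS v)].

Lemma trip_card a : #|trip a| = 3.
Proof. by rewrite cards3 // (inj_eq Some_inj) eq_sym ordS_neq. Qed.

Lemma cons3_card v : #|cons3 v| = 3.
Proof. by rewrite cards3 // (inj_eq Some_inj) ?pred_neq // eq_sym ?ordS_pred_neq ?ordS_neq. Qed.

Lemma trip_zf a : zero_forcing_set W (trip a).
Proof.
apply: meets_zf => F fF; apply/negP => /eqP E.
have nF z : z \in trip a -> z \notin F.
  move=> zt; apply/negP => zF; have : z \in trip a :&: F by rewrite inE zt zF.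
  by rewrite E inE.
apply: (@no_adj_pair F a fF); apply: nF; by rewrite !inE eqxx ?orbT.
Qed.

Lemma cons3_zf v : zero_forcing_set W (cons3 v).
Proof.
apply: meets_zf => F fF; apply/negP => /eqP E.
have nF z : z \in cons3 v -> z \notin F.
  move=> zt; apply/negP => zF; have : z \in cons3 v :&: F by rewrite inE zt zF.
  by rewrite E inE.
case: (boolP (None \in F)) => hN.
  have vc : Some v \in cons3 v by rewrite !inE eqxx ?orbT.
  have /orP[h|h] := hub_nbr fF hN (nF _ vc).
    by move: h; apply/negP; apply: nF; rewrite !inE eqxx ?orbT.
  by move: h; apply/negP; apply: nF; rewrite !inE eqxx ?orbT.
apply: (@no_adj_pair F v fF hN); apply: nF; by rewrite !inE eqxx ?orbT.
Qed.

Lemma zf_contains (B : {set V}) : zero_forcing_set W B ->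
  exists T : {set V}, [/\ T \subset B, #|T| = 3 & zero_forcing_set W T].
Proof.
move=> zB.
set I := [set i | Some i \in B].
have inI i : (i \in I) = (Some i \in B) by rewrite inE.
have [a [aI aSI]] : exists a, a \in I /\ ordS a \in I.
  apply: NNPP => no.
  have indep : forall i, i \in I -> ordS i \notin I.
    move=> i iI; apply/negP => h; apply: no; by exists i.
  have := zf_meets zB (cycfort_fort indep).
  apply/negP; rewrite negbK.
  by apply/eqP/setP => -[i|]; rewrite !inE ?andbF // -?inI; case: (i \in I).
case: (boolP (None \in B)) => hN.
  exists (trip a); split; [| exact: trip_card | exact: trip_zf].
  by apply/subsetP => y; rewrite !inE -?orbA => /or3P[]/eqP->; rewrite // -inI.
have [v [vI vSI vPI]] : exists v, [/\ v \in I, ordS v \in I & ord_pred v \in I].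
  apply: NNPP => no.
  have := zf_meets zB (hubfort_fort (dom_compl no)).
  apply/negP; rewrite negbK.
  by apply/eqP/setP => -[i|]; rewrite !inE /= ?(negbTE hN) // -?inI; case: (i \in I).
exists (cons3 v); split; [| exact: cons3_card | exact: cons3_zf].
by apply/subsetP => y; rewrite !inE -?orbA => /or3P[]/eqP->; rewrite -inI.
Qed.

Lemma trip_min : minset (zero_forcing_set W) (trip a0).
Proof.
apply/minsetP; split; first exact: trip_zf.
move=> B zB sub; apply/eqP; rewrite eqEcard sub /= trip_card.
have [T [TB cT _]] := zf_contains zB; rewrite -cT; exact: subset_leq_card TB.
Qed.

Lemma main :
  [/\ ZIR W = r - domination_number Cy,
      r - domination_number Cy = r - (r + 2) %/ 3,
      zir W = 3,
      Zf W = 3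
    & Zbar W = 3].
Proof.
have dE := dom_eq.
have bound3 : 3 <= r - (r + 2) %/ 3 by lia.
have cV : #|{: option 'I_r}| = r.+1 by rewrite card_option card_ord.
split.
- rewrite dE; apply/eqP; rewrite eqn_leq; apply/andP; split.
    by apply/bigmax_leqP => S /maxsetp zS; exact: ZIr_ub zS.
  have [S' mS' sub] := maxset_exists S0_ZIr.
  apply: leq_trans (leq_bigmax_cond _ mS').
  exact: leq_trans S0_card (subset_leq_card sub).
- by rewrite dE.
- apply/eqP; rewrite eqn_leq; apply/andP; split.
    rewrite /zir; apply: leq_trans (bigmin_le _ _ T1_max) _.
    by have := trip_card a0; rewrite /trip => ->.
  apply: bigmin_ge; first by rewrite cV; lia.
  by move=> S /max_ge3.
- apply/eqP; rewrite eqn_leq; apply/andP; split.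
    rewrite /Zf; apply: leq_trans (bigmin_le _ _ (trip_zf a0)) _.
    by rewrite trip_card.
  apply: bigmin_ge; first by rewrite cV; lia.
  by move=> B /zf_contains [T [TB <- _]]; exact: subset_leq_card.
apply/eqP; rewrite eqn_leq; apply/andP; split.
  apply/bigmax_leqP => B mB.
  have [T [TB cT zT]] := zf_contains (minsetp mB).
  by have E := minsetinf mB zT TB; rewrite -E cT.
rewrite /Zbar; apply: leq_trans _ (leq_bigmax_cond _ trip_min).
by rewrite trip_card.
Qed.

End Wheel.

Theorem proposition6p4 (r : nat) (hr : 5 <= r) :
  [/\ ZIR (@wheel_adj r) = r - domination_number (@cycle_adj r),
      r - domination_number (@cycle_adj r) = r - (r + 2) %/ 3,
      zir (@wheel_adj r) = 3,
      Zf (@wheel_adj r) = 3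
    & Zbar (@wheel_adj r) = 3].
Proof. exact: main hr. Qed.
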